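(* Let $\ell\le d\le n/2$ and suppose $d$ is known in advance to the algorithm. Any adaptive deterministic group testing algorithm that, for every defective set $I\subseteq[n]$ with $|I|=d$, detects $\ell$ defective items must make (in the worst case over $I$) at least $\max(\ell\log(n/d),\log n-1)=\Omega(\ell\log(n/d)+\log n)$ tests.
   Context: Group testing: items $X=[n]$, unknown defective set $I\subseteq X$ with $d=|I|$. A test $Q\subseteq X$ has answer $1$ if $Q\cap I\neq\emptyset$ and $0$ otherwise; the algorithm accesses $I$ only through tests, and in an adaptive algorithm tests may depend on previous answers. ''Detects $\ell$ defective items'' means it outputs $L\subseteq I$ with $|L|=\ell$. ''$d$ is known in advance'' means the algorithm is given an integer $D$ with $d/4\le D\le 4d$ (in particular, the bound applies even when the algorithm is given $d$ exactly). Logarithms are base 2. *)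

(* Defs.v *)
From mathcomp Require Import all_boot.
From Stdlib Require Import Reals.

Set Implicit Arguments. Unset Strict Implicit. Unset Printing Implicit Defensive.

(* An adaptive deterministic group testing algorithm on items 'I_n is a
   (finite) decision tree: at an internal node it asks test Q; the answer
   is 1 iff Q meets the defective set I, and it then continues in the
   corresponding subtree. *)
Inductive gtree (n : nat) : Type :=
  | Leaf (L : {set 'I_n})
  | Node (Q : {set 'I_n}) (t0 t1 : gtree n).

Definition test_ans (n : nat) (I Q : {set 'I_n}) : bool := Q :&: I != set0.

Fixpoint gt_output (n : nat) (t : gtree n) (I : {set 'I_n}) : {set 'I_n} :=
  match t with
  | Leaf L => L
  | Node Q t0 t1 => if test_ans I Q then gt_output t1 I else gt_output t0 I
  end.

Fixpoint gt_tests (n : nat) (t : gtree n) (I : {set 'I_n}) : nat :=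
  match t with
  | Leaf _ => 0
  | Node Q t0 t1 => (if test_ans I Q then gt_tests t1 I else gt_tests t0 I).+1
  end.

Definition detects (n d l : nat) (t : gtree n) : Prop :=
  forall I : {set 'I_n}, #|I| = d ->
    gt_output t I \subset I /\ #|gt_output t I| = l.

Definition log2 (x : R) : R := (ln x / ln 2)%R.

(* Main.v *)
Require Import Defs.
From mathcomp Require Import all_boot.
From Stdlib Require Import Reals.
From mathcomp Require Import zify.
From Stdlib Require Import Lra.
From mathcomp Require ssralg ring.

Module Aux.
Import ssralg ring.
Import ssreflect ssrbool ssrnat eqtype seq fintype finset bigop binomial.

Lemma outs_card n (t : gtree n) (F : {set {set 'I_n}}) D :
  (forall I, I \in F -> gt_tests t I <= D) ->
  #|[set gt_output t I | I in F]| <= 2 ^ D.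
Proof.
elim: t F D => [L|Q t0 IH0 t1 IH1] F D HF.
  apply: (@leq_trans 1); last by rewrite expn_gt0.
  apply: (@leq_trans #|[set L]|); last by rewrite cards1.
  apply: subset_leq_card; apply/subsetP => x /imsetP [I _ ->]; by rewrite /= set11.
case: D HF => [|D] HF.
  suff -> : F = set0 by rewrite imset0 cards0.
  apply/setP => I; rewrite in_set0; apply/negP => /HF; by [].
pose F1 := [set I in F | test_ans I Q].
pose F0 := [set I in F | ~~ test_ans I Q].
apply: (@leq_trans #|[set gt_output t0 I | I in F0] :|: [set gt_output t1 I | I in F1]|).
  apply: subset_leq_card; apply/subsetP => x /imsetP [I IF ->] /=.
  case: (boolP (test_ans I Q)) => h; apply/setUP; [right|left]; apply/imsetP;
    exists I; rewrite /F0 /F1 ?in_set ?IF ?h //= ?h ?(negbTE h) //.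
have h0 : #|[set gt_output t0 I | I in F0]| <= 2 ^ D.
  apply: IH0 => J. rewrite /F0 in_set. move=> /andP [JF h]. move: (HF J JF) => /=.
  by rewrite (negbTE h).
have h1 : #|[set gt_output t1 I | I in F1]| <= 2 ^ D.
  apply: IH1 => J. rewrite /F1 in_set. move=> /andP [JF h]. move: (HF J JF) => /=.
  by rewrite h.
rewrite cardsU expnS; lia.
Qed.

Lemma exists_ksub n (A : {set 'I_n}) k : k <= #|A| ->
  exists B : {set 'I_n}, B \subset A /\ #|B| = k.
Proof.
move=> Hk.
have : 0 < #|[set B : {set 'I_n} | B \subset A & #|B| == k]|.
  by rewrite cards_draws bin_gt0.
case/card_gt0P => B; rewrite in_set => /andP [BA /eqP HB].
by exists B.
Qed.

Lemma count_L n d l (L : {set 'I_n}) : #|L| = l -> l <= d ->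
  #|[set I : {set 'I_n} | (#|I| == d) && (L \subset I)]| <= 'C(n - l, d - l).
Proof.
move=> HL Hld.
pose f := fun I : {set 'I_n} => I :\: L.
rewrite -(@card_in_imset _ _ f); last first.
  move=> I J; rewrite !in_set => /andP [_ LI] /andP [_ LJ] E.
  apply/setP => x; move/setP: E => /(_ x); rewrite /f !in_setD.
  case xL: (x \in L) => /=; last by [].
  by rewrite (subsetP LI _ xL) (subsetP LJ _ xL).
have -> : 'C(n - l, d - l) = #|[set B : {set 'I_n} | B \subset ~: L & #|B| == d - l]|.
  rewrite cards_draws; congr 'C(_, _).
  have := cardsC L; rewrite card_ord HL; lia.
apply: subset_leq_card; apply/subsetP => B /imsetP [I]; rewrite in_set => /andP [/eqP HI LI] ->.
rewrite in_set; apply/andP; split.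
  by apply/subsetP => x; rewrite /f in_setD in_setC => /andP [].
by rewrite /f cardsD HI (setIidPr LI) HL.
Qed.

Lemma binom_ratio n d l : l <= d -> d <= n ->
  n ^ l * 'C(n - l, d - l) <= d ^ l * 'C(n, d).
Proof.
move=> Hld Hdn; elim: l Hld => [|l IH] Hld.
  by rewrite !expn0 !subn0.
have IH' := IH (ltnW Hld).
have E : (n - l) * 'C(n - l.+1, d - l.+1) = (d - l) * 'C(n - l, d - l).
  have := mul_bin_diag (n - l) (d - l.+1).
  have -> : (n - l).-1 = n - l.+1 by lia.
  have -> : (d - l.+1).+1 = d - l by lia.
  by [].
have H2 : n * (d - l) <= d * (n - l) by nia.
have Ha : 0 < n - l by lia.
rewrite -(leq_pmul2r Ha).
rewrite !expnS.
move: E H2 IH'; set N := n ^ l; set M := d ^ l; set c' := 'C(_, d - l.+1);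
  set c := 'C(n - l, _); set C := 'C(n, d); set a := n - l; set b := d - l.
move=> E H2 IH'.
have h1 : n * N * c' * a = N * c * (n * b).
  transitivity (n * N * (a * c')); first by ring.
  by rewrite E; ring.
rewrite h1.
apply: (@leq_trans (N * c * (d * a))); first by rewrite leq_mul2l H2 orbT.
apply: (@leq_trans (M * C * (d * a))); first by rewrite leq_mul2r IH' orbT.
have -> : M * C * (d * a) = d * M * C * a by ring.
by [].
Qed.


Lemma nat_bounds n d l (t : gtree n) :
  (1 <= l)%N -> (l <= d)%N -> (d.*2 <= n)%N ->
  detects d l t ->
  exists I : {set 'I_n}, #|I| = d /\
    n ^ l <= 2 ^ gt_tests t I * d ^ l /\ n <= 2 ^ (gt_tests t I).+1.
Proof.
move=> Hl1 Hld Hdn Hdet.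
pose F := [set I : {set 'I_n} | #|I| == d].
have Hdn2 : d <= n by move: Hdn; rewrite -addnn => H; exact: leq_trans (leq_addr d d) H.
have n0 : 0 < n := leq_trans Hl1 (leq_trans Hld Hdn2).
have Fne : 0 < #|F| by rewrite card_draws card_ord bin_gt0.
have [I0 I0F Hmax] := eq_bigmax_cond (fun I => gt_tests t I) Fne.
exists I0; split; first by move: I0F; rewrite in_set => /eqP.
rewrite -Hmax.
set D := \max_(I in F) gt_tests t I.
have HD : forall I, I \in F -> gt_tests t I <= D.
  by move=> I IF; apply: leq_bigmax_cond.
pose O := [set gt_output t I | I in F].
have HO : #|O| <= 2 ^ D := @outs_card _ t F D HD.
have HOl : forall L, L \in O -> #|L| = l.
  move=> L /imsetP [I IF ->]; rewrite in_set in IF.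
  by case: (Hdet I (eqP IF)).
split.
  have Hcnt : 'C(n, d) <= #|O| * 'C(n - l, d - l).
    rewrite -[n in 'C(n, _)]card_ord -card_draws -/F.
    rewrite -sum1_card (partition_big (fun I => gt_output t I) (mem O)) /=; last first.
      by move=> I IF; apply: imset_f.
    rewrite -sum_nat_const; apply: leq_sum => L LO.
    rewrite sum1dep_card.
    apply: (leq_trans _ (@count_L _ _ _ _ (HOl L LO) Hld)).
    apply: subset_leq_card; apply/subsetP => I; rewrite !in_set => /andP [IF /eqP <-].
    have IF1 : #|I| == d by move: IF; rewrite /F ?in_set.
    rewrite IF1 /=.
    by case: (Hdet I (eqP IF1)).
  have Hr := @binom_ratio n d l Hld Hdn2.
  have Cpos : 0 < 'C(n - l, d - l) by rewrite bin_gt0 leq_sub2r.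
  rewrite -(leq_pmul2r Cpos).
  apply: (leq_trans Hr).
  have -> : 2 ^ D * d ^ l * 'C(n - l, d - l) = d ^ l * (2 ^ D * 'C(n - l, d - l)) by rewrite [2 ^ D * _]mulnC -mulnA.
  rewrite leq_mul2l; apply/orP; right.
  apply: (leq_trans Hcnt); by rewrite leq_mul2r HO orbT.
rewrite leqNgt; apply/negP => Hlt.
have x0 : 'I_n := Ordinal n0.
pose g := fun L : {set 'I_n} => odflt x0 [pick y in L].
pose X := g @: O.
have HX : #|X| <= 2 ^ D := leq_trans (leq_imset_card _ _) HO.
have Hc : d <= #|~: X|.
  move: (cardsC X) HX Hlt Hdn; rewrite card_ord expnS.
  move: (#|X|) (#|~: X|) (2 ^ D) => a b c; clear; lia.
have [I [IX HI]] := @exists_ksub _ _ _ Hc.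
have IF : I \in F by rewrite in_set HI.
have [Hsub Hcard] := Hdet I HI.
have gL : g (gt_output t I) \in gt_output t I.
  rewrite /g; case: pickP => [y -> // | H0].
  have h0 : #|gt_output t I| = 0 by apply: eq_card0.
  by rewrite h0 in Hcard; rewrite -Hcard in Hl1.
have h1 : g (gt_output t I) \in X by apply: imset_f; apply: imset_f.
have : g (gt_output t I) \in ~: X by apply: (subsetP IX); apply: (subsetP Hsub).
by rewrite in_setC h1.
Qed.

End Aux.

Lemma INR_expn (m k : nat) : INR (expn m k) = (INR m ^ k)%R.
Proof.
elim: k => [|k IH]; first by rewrite expn0.
by rewrite expnS mulnE mult_INR IH.
Qed.

Lemma INR_leq (a b : nat) : (a <= b)%N -> (INR a <= INR b)%R.
Proof. by move=> /leP H; apply: le_INR. Qed.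

Lemma lnle (x y : R) : (0 < x)%R -> (x <= y)%R -> (ln x <= ln y)%R.
Proof.
move=> Hx Hxy; case: (Rle_lt_or_eq_dec _ _ Hxy) => [H|->].
  by apply: Rlt_le; apply: ln_increasing.
by apply: Rle_refl.
Qed.

Lemma ln2_pos : (0 < ln 2)%R.
Proof. rewrite -ln_1; apply: ln_increasing; lra. Qed.

Theorem theorem2 (n d l : nat) (t : gtree n) :
  (1 <= l)%N -> (l <= d)%N -> (d.*2 <= n)%N ->
  detects d l t ->
  exists I : {set 'I_n}, #|I| = d /\
    (Rmax (INR l * log2 (INR n / INR d)) (log2 (INR n) - 1) <= INR (gt_tests t I))%R.
Proof.
move=> Hl1 Hld Hdn Hdet.
have [I [HI [HA HB]]] := Aux.nat_bounds n d l t Hl1 Hld Hdn Hdet.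
exists I; split => //.
move: HA HB; set D := gt_tests t I => HA HB.
have d0 : (0 < d)%N := leq_trans Hl1 Hld.
have n0 : (0 < n)%N by move: Hdn; rewrite -addnn => H; exact: leq_trans d0 (leq_trans (leq_addr d d) H).
have Rd : (0 < INR d)%R by apply: lt_0_INR; apply/ltP.
have Rn : (0 < INR n)%R by apply: lt_0_INR; apply/ltP.
have L2 := ln2_pos.
have HA' := @INR_leq _ _ HA; rewrite mulnE mult_INR !INR_expn in HA'.
have HB' := @INR_leq _ _ HB; rewrite !INR_expn in HB'.
have Rdl : (0 < INR d ^ l)%R by apply: pow_lt.
have I2 : INR 2 = 2%R by simpl; lra.
rewrite I2 in HA' HB'.
have H2 : (0 < 2 ^ D)%R by apply: pow_lt; lra.
apply: Rmax_lub; rewrite /log2.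
  have Hq : ((INR n / INR d) ^ l <= 2 ^ D)%R.
    rewrite /Rdiv Rpow_mult_distr pow_inv.
    apply: (Rmult_le_reg_r (INR d ^ l)) => //.
    rewrite Rmult_assoc Rinv_l; last by apply: Rgt_not_eq.
    by rewrite Rmult_1_r.
  have Hq0 : (0 < (INR n / INR d) ^ l)%R by apply: pow_lt; apply: Rdiv_lt_0_compat.
  have := @lnle _ _ Hq0 Hq.
  have Hnd : (0 < INR n / INR d)%R by apply: Rdiv_lt_0_compat.
  have Hp : (0 < 2)%R by lra.
  rewrite (ln_pow _ Hnd) (ln_pow _ Hp).
  move=> H.
  rewrite {1}/Rdiv -Rmult_assoc.
  apply: (Rmult_le_reg_r (ln 2)) => //.
  rewrite Rmult_assoc Rinv_l; last by apply: Rgt_not_eq.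
  by rewrite Rmult_1_r.
have H := @lnle _ _ Rn HB'.
have Hp : (0 < 2)%R by lra.
rewrite (ln_pow _ Hp) in H.
apply (Rmult_le_reg_r (ln 2)); first exact L2.
rewrite Rmult_minus_distr_r /Rdiv Rmult_assoc Rinv_l; last by apply: Rgt_not_eq.
rewrite S_INR /= in H.
lra.
Qed.
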